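(* If $\Lambda$ is a finite index subgroup of a group $\Gamma$, then $\mathrm{Lit}(\Lambda)=\mathrm{Lit}(\Gamma)$.
   Context: $T_1(\Gamma)$ is the space of all $f\colon\Gamma\to\mathbf{C}$ for which there exist $f_1,f_2\colon\Gamma\times\Gamma\to\mathbf{C}$ with $f(x^{-1}y)=f_1(x,y)+f_2(x,y)$ for all $x,y$, $\sup_x\sum_y|f_1(x,y)|<\infty$, $\sup_y\sum_x|f_2(x,y)|<\infty$; $\mathrm{Lit}(\Gamma)=\inf\{p>0:T_1(\Gamma)\subseteq\ell^p(\Gamma)\}\in[0,\infty]$. *)

(* Defs.v *)
From Stdlib Require Import Reals List ProofIrrelevance.
From Coquelicot Require Import Coquelicot.
Import ListNotations.
Open Scope R_scope.

Record group := Group {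
  carrier :> Type;
  gmul : carrier -> carrier -> carrier;
  ginv : carrier -> carrier;
  gone : carrier;
  gmulA : forall x y z, gmul x (gmul y z) = gmul (gmul x y) z;
  gmul1 : forall x, gmul gone x = x;
  gmulV : forall x, gmul (ginv x) x = gone
}.

Record subgroup (G : group) := Subgroup {
  sg_mem :> G -> Prop;
  sg_one : sg_mem (gone G);
  sg_mul : forall x y, sg_mem x -> sg_mem y -> sg_mem (gmul G x y);
  sg_inv : forall x, sg_mem x -> sg_mem (ginv G x)
}.

Section SubGroupAsGroup.
Variables (G : group) (H : subgroup G).
Definition sg_car := {x : G | H x}.
Definition sg_gmul (a b : sg_car) : sg_car :=
  exist _ (gmul G (proj1_sig a) (proj1_sig b)) (sg_mul _ H _ _ (proj2_sig a) (proj2_sig b)).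
Definition sg_ginv (a : sg_car) : sg_car :=
  exist _ (ginv G (proj1_sig a)) (sg_inv _ H _ (proj2_sig a)).
Definition sg_gone : sg_car := exist _ (gone G) (sg_one _ H).
Lemma sg_eq (a b : sg_car) : proj1_sig a = proj1_sig b -> a = b.
Proof. destruct a, b; simpl; intros ->; f_equal; apply proof_irrelevance. Qed.
Lemma sg_gmulA x y z : sg_gmul x (sg_gmul y z) = sg_gmul (sg_gmul x y) z.
Proof. apply sg_eq; simpl; apply gmulA. Qed.
Lemma sg_gmul1 x : sg_gmul sg_gone x = x.
Proof. apply sg_eq; simpl; apply gmul1. Qed.
Lemma sg_gmulV x : sg_gmul (sg_ginv x) x = sg_gone.
Proof. apply sg_eq; simpl; apply gmulV. Qed.
Definition subgroup_group : group :=
  Group sg_car sg_gmul sg_ginv sg_gone sg_gmulA sg_gmul1 sg_gmulV.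
End SubGroupAsGroup.

Definition finite_index (G : group) (H : subgroup G) : Prop :=
  exists reps : list G, forall x : G,
    exists g, In g reps /\ H (gmul G (ginv G g) x).

Definition lsum {T : Type} (l : list T) (a : T -> R) : R :=
  fold_right Rplus 0 (map a l).

(* sum_{t in T} a t < oo for a >= 0 : all finite partial sums (over
   duplicate-free lists) are bounded. *)
Definition summable {T : Type} (a : T -> R) : Prop :=
  exists M : R, forall l : list T, NoDup l -> lsum l a <= M.

(* |z|^p with the convention 0^p = 0 (for p > 0). *)
Definition cpow (z : C) (p : R) : R :=
  if Req_EM_T (Cmod z) 0 then 0 else Rpower (Cmod z) p.

Definition lp (G : group) (p : R) (f : G -> C) : Prop :=
  summable (fun x => cpow (f x) p).

Definition T1 (G : group) (f : G -> C) : Prop :=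
  exists f1 f2 : G -> G -> C,
    (forall x y, f (gmul G (ginv G x) y) = Cplus (f1 x y) (f2 x y)) /\
    (exists M : R, forall x : G, forall l : list G, NoDup l ->
        lsum l (fun y => Cmod (f1 x y)) <= M) /\
    (exists M : R, forall y : G, forall l : list G, NoDup l ->
        lsum l (fun x => Cmod (f2 x y)) <= M).

(* Lit(G) = inf { p > 0 : T_1(G) ⊆ l^p(G) } in [0, +oo] (inf of empty = +oo). *)
Definition Lit (G : group) : Rbar :=
  Glb_Rbar (fun p => 0 < p /\ forall f : G -> C, T1 G f -> lp G p f).

(* Main.v *)
Require Import Defs.
From Stdlib Require Import Reals.
From Coquelicot Require Import Coquelicot.
From Stdlib Require Import List ClassicalEpsilon FunctionalExtensionality PropExtensionality FinFun Lra.
Import ListNotations.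
Open Scope R_scope.

Section GL.
Variable G : group.
Lemma mulV x : gmul G x (ginv G x) = gone G.
Proof.
  transitivity (gmul G (gmul G (ginv G (gmul G x (ginv G x))) (gmul G x (ginv G x))) (gmul G x (ginv G x))).
  - rewrite gmulV, gmul1. reflexivity.
  - rewrite <- gmulA.
    replace (gmul G (gmul G x (ginv G x)) (gmul G x (ginv G x))) with (gmul G x (ginv G x)).
    + apply gmulV.
    + rewrite <- gmulA, (gmulA G (ginv G x) x), gmulV, gmul1. reflexivity.
Qed.
Lemma mul1r x : gmul G x (gone G) = x.
Proof. rewrite <- (gmulV G x), gmulA, mulV, gmul1. reflexivity. Qed.
Lemma inv_uniq u v : gmul G u v = gone G -> ginv G v = u.
Proof. intros E. rewrite <- (gmul1 G (ginv G v)), <- E, <- gmulA, mulV, mul1r. reflexivity. Qed.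
Lemma invK x : ginv G (ginv G x) = x.
Proof. apply inv_uniq, mulV. Qed.
Lemma invM a b : ginv G (gmul G a b) = gmul G (ginv G b) (ginv G a).
Proof.
  apply inv_uniq. rewrite <- gmulA, (gmulA G (ginv G a) a), gmulV, gmul1, gmulV. reflexivity.
Qed.
Lemma mulKV g x : gmul G g (gmul G (ginv G g) x) = x.
Proof. rewrite gmulA, mulV, gmul1. reflexivity. Qed.
Lemma mulVK g x : gmul G (ginv G g) (gmul G g x) = x.
Proof. rewrite gmulA, gmulV, gmul1. reflexivity. Qed.
End GL.

Fixpoint subl {A B : Type} (P : A -> Prop) (phi : forall y, P y -> B) (l : list A) : list B :=
  match l with
  | [] => []
  | y :: l' => match excluded_middle_informative (P y) with
               | left h => phi y h :: subl P phi l'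
               | right _ => subl P phi l'
               end
  end.

Lemma lsum_subl {A B : Type} (P : A -> Prop) (phi : forall y, P y -> B) (d : B -> R) l :
  lsum l (fun y => match excluded_middle_informative (P y) with
                   | left h => d (phi y h) | right _ => 0 end) = lsum (subl P phi l) d.
Proof.
  induction l as [|a l IH]; simpl; auto. unfold lsum in *; simpl.
  destruct (excluded_middle_informative (P a)); simpl; rewrite IH; ring.
Qed.

Lemma subl_In {A B : Type} (P : A -> Prop) (phi : forall y, P y -> B) l b :
  In b (subl P phi l) -> exists y h, In y l /\ b = phi y h.
Proof.
  induction l as [|a l IH]; simpl; [tauto|].
  destruct (excluded_middle_informative (P a)) as [h|h]; simpl.
  - intros [E|E]; [exists a, h; auto|]. destruct (IH E) as [y [h' [? ?]]]. exists y, h'; auto.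
  - intros E. destruct (IH E) as [y [h' [? ?]]]. exists y, h'; auto.
Qed.

Lemma NoDup_subl {A B : Type} (P : A -> Prop) (phi : forall y, P y -> B) l :
  (forall y y' h h', phi y h = phi y' h' -> y = y') -> NoDup l -> NoDup (subl P phi l).
Proof.
  intros Hi Hl. induction Hl as [|a l Ha Hl IH]; simpl; [constructor|].
  destruct (excluded_middle_informative (P a)) as [h|h]; auto.
  constructor; auto. intros E. destruct (subl_In _ _ _ _ E) as [y [h' [Hy E']]].
  apply Hi in E'. subst. auto.
Qed.

Lemma lsum_map {A B : Type} (f : A -> B) l a : lsum (map f l) a = lsum l (fun x => a (f x)).
Proof. unfold lsum; rewrite map_map; reflexivity. Qed.

Lemma lsum_ext {A : Type} (l : list A) a b : (forall x, a x = b x) -> lsum l a = lsum l b.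
Proof. intros E. unfold lsum. f_equal. apply map_ext. auto. Qed.

Lemma lsum_le {A : Type} (l : list A) a b : (forall x, In x l -> a x <= b x) -> lsum l a <= lsum l b.
Proof.
  induction l as [|x l IH]; unfold lsum in *; simpl; intros Hab; [lra|].
  apply Rplus_le_compat; auto.
Qed.

Lemma lsum_nonneg {A : Type} (l : list A) a : (forall x, 0 <= a x) -> 0 <= lsum l a.
Proof. induction l as [|y l IH]; unfold lsum in *; simpl; intros Ha; [lra|]. specialize (IH Ha). specialize (Ha y). lra. Qed.

Lemma lsum_In_le {A : Type} (l : list A) a x : (forall x, 0 <= a x) -> In x l -> a x <= lsum l a.
Proof.
  induction l as [|y l IH]; simpl; [tauto|]. intros Ha [E|E]; unfold lsum in *; simpl.
  - subst. pose proof (lsum_nonneg l a Ha) as Hn. unfold lsum in Hn. lra.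
  - specialize (IH Ha E). specialize (Ha y). lra.
Qed.

Lemma lsum_zero {A : Type} (l : list A) : lsum l (fun _ => 0) = 0.
Proof. induction l; unfold lsum in *; simpl; auto. rewrite IHl; ring. Qed.

Lemma lsum_plus {A : Type} (l : list A) a b : lsum l (fun x => a x + b x) = lsum l a + lsum l b.
Proof. induction l; unfold lsum in *; simpl; [ring|]. rewrite IHl; ring. Qed.

Lemma lsum_swap {A B : Type} (l1 : list A) (l2 : list B) (e : A -> B -> R) :
  lsum l1 (fun x => lsum l2 (fun y => e x y)) = lsum l2 (fun y => lsum l1 (fun x => e x y)).
Proof.
  induction l1 as [|a l1 IH].
  - unfold lsum at 1; simpl. symmetry. apply lsum_zero.
  - unfold lsum at 1; simpl. fold (lsum l1 (fun x => lsum l2 (fun y => e x y))).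
    rewrite IH. rewrite <- lsum_plus. reflexivity.
Qed.

Lemma collect {A : Type} (l : list A) (P : A -> R -> Prop) :
  (forall a M M', M <= M' -> P a M -> P a M') ->
  (forall a, In a l -> exists M, P a M) -> exists M, forall a, In a l -> P a M.
Proof.
  intros Hm. induction l as [|x l IH]; intros Hl.
  - exists 0. simpl; tauto.
  - destruct (Hl x (or_introl eq_refl)) as [M1 H1].
    destruct IH as [M2 H2]. { intros; apply Hl; simpl; auto. }
    exists (Rmax M1 M2). intros a [E|E].
    + subst. apply Hm with M1; auto. apply Rmax_l.
    + apply Hm with M2; auto. apply Rmax_r.
Qed.

Lemma cpow_nonneg z p : 0 <= cpow z p.
Proof. unfold cpow. destruct Req_EM_T; [lra|]. unfold Rpower. apply Rlt_le, exp_pos. Qed.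

Definition Sset (G : group) (p : R) : Prop := 0 < p /\ forall f : G -> C, T1 G f -> lp G p f.

Section Dir1.
Variables (G : group) (H : subgroup G).

Definition rep (x : G) : G := epsilon (inhabits (gone G)) (fun g => H (gmul G (ginv G g) x)).

Lemma rep_spec x : H (gmul G (ginv G (rep x)) x).
Proof.
  unfold rep. apply (epsilon_spec (inhabits (gone G)) (fun g => H (gmul G (ginv G g) x))).
  exists x. rewrite gmulV. apply sg_one.
Qed.

Lemma rep_eq x y : H (gmul G (ginv G x) y) -> rep x = rep y.
Proof.
  intros hxy. unfold rep. f_equal. apply functional_extensionality; intro g.
  apply propositional_extensionality; split; intro h.
  - replace (gmul G (ginv G g) y) with (gmul G (gmul G (ginv G g) x) (gmul G (ginv G x) y))
      by (rewrite <- gmulA, mulKV; reflexivity).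
    apply sg_mul; auto.
  - replace (gmul G (ginv G g) x) with (gmul G (gmul G (ginv G g) y) (ginv G (gmul G (ginv G x) y)))
      by (rewrite invM, invK, <- gmulA, mulKV; reflexivity).
    apply sg_mul; auto. apply sg_inv; auto.
Qed.

Definition aa (x : G) : sg_car G H := exist _ (gmul G (ginv G (rep x)) x) (rep_spec x).

Definition ext (f : sg_car G H -> C) (z : G) : C :=
  match excluded_middle_informative (H z) with
  | left h => f (exist _ z h) | right _ => RtoC 0 end.

Lemma aa_inj x y y' : H (gmul G (ginv G x) y) -> H (gmul G (ginv G x) y') -> aa y = aa y' -> y = y'.
Proof.
  intros h h' E. apply (f_equal (@proj1_sig _ _)) in E. simpl in E.
  rewrite <- (rep_eq x y h), <- (rep_eq x y' h') in E.
  rewrite <- (mulKV G (rep x) y), E, mulKV. reflexivity.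
Qed.

Lemma ext_T1 f : T1 (subgroup_group G H) f -> T1 G (ext f).
Proof.
  intros [f1 [f2 [Hd [[M1 HM1] [M2 HM2]]]]].
  exists (fun x y => match excluded_middle_informative (H (gmul G (ginv G x) y)) with
                     | left _ => f1 (aa x) (aa y) | right _ => RtoC 0 end).
  exists (fun x y => match excluded_middle_informative (H (gmul G (ginv G x) y)) with
                     | left _ => f2 (aa x) (aa y) | right _ => RtoC 0 end).
  split; [|split].
  - intros x y. unfold ext. destruct (excluded_middle_informative (H (gmul G (ginv G x) y))) as [h|h].
    + rewrite <- Hd. f_equal. apply sg_eq. simpl.
      rewrite (rep_eq x y h), invM, invK, <- gmulA, mulKV. reflexivity.
    + symmetry. apply Cplus_0_l.
  - exists M1. intros x l Hl.
    replace (lsum l _) with (lsum l (fun y => match excluded_middle_informative (H (gmul G (ginv G x) y)) with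
                   | left h => (fun b => Cmod (f1 (aa x) b)) ((fun y (_ : H (gmul G (ginv G x) y)) => aa y) y h) | right _ => 0 end)).
    + rewrite (lsum_subl (fun y => H (gmul G (ginv G x) y)) (fun y (_ : H (gmul G (ginv G x) y)) => aa y) (fun b => Cmod (f1 (aa x) b))). apply HM1. apply NoDup_subl; auto.
      intros y y' h h' E. apply (aa_inj x y y' h h' E).
    + apply lsum_ext. intros y. destruct excluded_middle_informative; auto.
      symmetry; apply Cmod_0.
  - exists M2. intros y l Hl.
    replace (lsum l _) with (lsum l (fun x => match excluded_middle_informative (H (gmul G (ginv G x) y)) with
                   | left h => (fun a => Cmod (f2 a (aa y))) ((fun x (_ : H (gmul G (ginv G x) y)) => aa x) x h) | right _ => 0 end)).
    + rewrite (lsum_subl (fun x => H (gmul G (ginv G x) y)) (fun x (_ : H (gmul G (ginv G x) y)) => aa x) (fun a => Cmod (f2 a (aa y)))). apply HM2. apply NoDup_subl; auto.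
      intros x x' h h' E. simpl in E.
      apply (f_equal (@proj1_sig _ _)) in E. simpl in E.
      rewrite (rep_eq x y h), <- (rep_eq x' y h') in E.
      rewrite <- (mulKV G (rep x') x), E, mulKV. reflexivity.
    + apply lsum_ext. intros x. destruct excluded_middle_informative; auto.
      symmetry; apply Cmod_0.
Qed.

Lemma ext_lp p f : lp G p (ext f) -> lp (subgroup_group G H) p f.
Proof.
  intros [M HM]. exists M. intros l Hl.
  replace (lsum l _) with (lsum (map (@proj1_sig _ _) l) (fun z => cpow (ext f z) p)).
  - apply HM. apply Injective_map_NoDup; auto. intros a b E; apply sg_eq; auto.
  - rewrite lsum_map. apply lsum_ext. intros [z hz]. simpl. unfold ext.
    destruct excluded_middle_informative as [h|h]; [|contradiction].
    do 2 f_equal. apply sg_eq. reflexivity.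
Qed.

Lemma dir1 p : Sset G p -> Sset (subgroup_group G H) p.
Proof. intros [hp HS]. split; auto. intros f Tf. apply ext_lp, HS, ext_T1, Tf. Qed.
End Dir1.

Section Dir2.
Variables (G : group) (H : subgroup G).

Lemma res_T1 g f : T1 G f -> T1 (subgroup_group G H) (fun a : sg_car G H => f (gmul G g (proj1_sig a))).
Proof.
  intros [f1 [f2 [Hd [[M1 HM1] [M2 HM2]]]]].
  exists (fun a b : sg_car G H => f1 (gmul G (proj1_sig a) (ginv G g)) (proj1_sig b)).
  exists (fun a b : sg_car G H => f2 (gmul G (proj1_sig a) (ginv G g)) (proj1_sig b)).
  split; [|split].
  - intros a b. rewrite <- Hd. f_equal. simpl. rewrite invM, invK. apply gmulA.
  - exists M1. intros a l Hl.
    replace (lsum l _) with (lsum (map (@proj1_sig _ _) l) (fun y => Cmod (f1 (gmul G (proj1_sig a) (ginv G g)) y)))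
      by (rewrite lsum_map; reflexivity).
    apply HM1. apply Injective_map_NoDup; auto. intros x y E; apply sg_eq; auto.
  - exists M2. intros b l Hl.
    replace (lsum l _) with (lsum (map (fun a : sg_car G H => gmul G (proj1_sig a) (ginv G g)) l) (fun x => Cmod (f2 x (proj1_sig b))))
      by (rewrite lsum_map; reflexivity).
    apply HM2. apply Injective_map_NoDup; auto. intros a a' E. apply sg_eq.
    transitivity (gmul G (gmul G (proj1_sig a) (ginv G g)) g).
    + rewrite <- gmulA, gmulV, mul1r; reflexivity.
    + rewrite E, <- gmulA, gmulV, mul1r; reflexivity.
Qed.

Lemma dir2 p : finite_index G H -> Sset (subgroup_group G H) p -> Sset G p.
Proof.
  intros [reps hreps] [hp HS]. split; auto. intros f Tf.
  assert (exists M, forall g, In g reps -> forall l : list (sg_car G H), NoDup l ->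
            lsum l (fun a => cpow (f (gmul G g (proj1_sig a))) p) <= M) as [M HM].
  { apply collect.
    - intros g M M' hle h l hl. specialize (h l hl). lra.
    - intros g _. apply (HS _ (res_T1 g f Tf)). }
  exists (lsum reps (fun _ => M)). intros l Hl.
  set (dd := fun g y => match excluded_middle_informative (H (gmul G (ginv G g) y)) with
                 | left h => (fun a : sg_car G H => cpow (f (gmul G g (proj1_sig a))) p)
                               ((fun y (h : H (gmul G (ginv G g) y)) => exist (fun z => H z) (gmul G (ginv G g) y) h) y h)
                 | right _ => 0 end).
  assert (dd_nonneg : forall g y, 0 <= dd g y).
  { intros g y. unfold dd. destruct excluded_middle_informative; [apply cpow_nonneg | lra]. }
  apply Rle_trans with (lsum l (fun y => lsum reps (fun g => dd g y))).
  - apply lsum_le. intros y _. destruct (hreps y) as [g [hg hy]].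
    apply Rle_trans with (dd g y).
    + unfold dd. destruct excluded_middle_informative; [|contradiction]. simpl. rewrite mulKV. lra.
    + apply (lsum_In_le reps (fun g => dd g y) g); auto.
  - rewrite lsum_swap. apply lsum_le. intros g hg.
    unfold dd. rewrite (lsum_subl (fun y => H (gmul G (ginv G g) y)) (fun y (h : H (gmul G (ginv G g) y)) => exist (fun z => H z) (gmul G (ginv G g) y) h) (fun a : sg_car G H => cpow (f (gmul G g (proj1_sig a))) p)). apply HM; auto.
    apply NoDup_subl; auto. intros y y' h h' E.
    apply (f_equal (@proj1_sig _ _)) in E. simpl in E.
    rewrite <- (mulKV G g y), E, mulKV. reflexivity.
Qed.
End Dir2.

Theorem proposition3p6 (G : group) (H : subgroup G) :
  finite_index G H -> Lit (subgroup_group G H) = Lit G.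
Proof.
  intros hfi. unfold Lit. f_equal. apply functional_extensionality; intro p.
  apply propositional_extensionality; split.
  - intros h. apply (dir2 G H p hfi h).
  - intros h. apply (dir1 G H p h).
Qed.
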